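(* Let $K\ge 2$ and let $L_1,\dots,L_K:\mathbb{R}^m\to\mathbb{R}$ be differentiable loss functions, and set $L_0=\frac1K\sum_{i=1}^K L_i$. Assume that for every $i\in\{0,1,\dots,K\}$ the gradient $\nabla L_i$ is $H$-Lipschitz, i.e. $\|\nabla L_i(x)-\nabla L_i(y)\|\le H\|x-y\|$ for all $x,y\in\mathbb{R}^m$, where $0<H<\infty$, and assume $L_0^*=\inf_{\theta\in\mathbb{R}^m}L_0(\theta)>-\infty$. Fix a step size $\alpha$ with $0<\alpha\le 1/H$ and a constant $c\ge 0$, and let $(\theta_t)_{t\ge 0}$ be generated by the CAGrad algorithm described in the context. Then: (1) If $c\ge 1$, every fixed point of CAGrad (i.e. every $\theta$ at which the CAGrad update direction vanishes) is a Pareto-stationary point of $(L_0,L_1,\dots,L_K)$. (2) If $0\le c<1$, then for every $T\ge 0$, $$\sum_{t=0}^T\|\nabla L_0(\theta_t)\|^2\le \frac{2\,(L_0(\theta_0)-L_0^* )}{\alpha(1-c^2)}.$$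
   Context: CAGrad (Conflict-Averse Gradient descent) algorithm: given an initial $\theta_0\in\mathbb{R}^m$, a constant $c\ge0$ and step size $\alpha>0$, at step $t\ge1$ let $g_0=\frac1K\sum_{i=1}^K\nabla L_i(\theta_{t-1})$ and $\phi=c^2\|g_0\|^2$. Let $\mathcal W=\{w\in\mathbb{R}^K: w_i\ge0,\ \sum_i w_i=1\}$ be the probability simplex, and for $w\in\mathcal W$ let $g_w=\frac1K\sum_{i=1}^K w_i\nabla L_i(\theta_{t-1})$. Let $w$ be a minimizer over $\mathcal W$ of $F(w)=g_w^\top g_0+\sqrt{\phi}\,\|g_w\|$, and update $\theta_t=\theta_{t-1}-\alpha\big(g_0+\frac{\phi^{1/2}}{\|g_w\|}g_w\big)$. (This update direction is the solution $d$ of $\max_{d\in\mathbb{R}^m}\min_{i\in[K]}\langle\nabla L_i(\theta_{t-1}),d\rangle$ subject to $\|d-g_0\|\le c\|g_0\|$.) Pareto-stationarity: for differentiable functions $F_1,\dots,F_N$ on $\mathbb{R}^m$, a point $\theta$ is Pareto-stationary if $\min_{w\in\Delta_N}\|\sum_{j=1}^N w_j\nabla F_j(\theta)\|=0$, where $\Delta_N$ is the probability simplex in $\mathbb{R}^N$. *)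

(* Defs.v *)
From HB Require Import structures.
From mathcomp Require Import all_boot all_order all_algebra.
From mathcomp Require Import all_classical all_reals all_analysis.
Set Implicit Arguments. Unset Strict Implicit. Unset Printing Implicit Defensive.
Import Order.TTheory GRing.Theory Num.Theory.
Import numFieldNormedType.Exports.
Local Open Scope ring_scope.

Section CAGradDefs.
Variables (R : realType) (m : nat).

Definition dotv (u v : 'rV[R]_m) : R := \sum_(j < m) u 0 j * v 0 j.
Definition enorm (v : 'rV[R]_m) : R := Num.sqrt (\sum_(j < m) v 0 j ^+ 2).

Definition grad (f : 'rV[R]_m -> R) (x : 'rV[R]_m) : 'rV[R]_m :=
  \row_(j < m) 'D_(delta_mx 0 j) f x.

Definition simplex (N : nat) (w : 'I_N -> R) : Prop :=
  (forall i, 0 <= w i) /\ \sum_(i < N) w i = 1.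

Definition pareto_stationary (N : nat) (F : 'I_N -> 'rV[R]_m -> R)
    (theta : 'rV[R]_m) : Prop :=
  exists w : 'I_N -> R, simplex w /\
    enorm (\sum_(j < N) w j *: grad (F j) theta) = 0.

Variable K : nat.
Implicit Types (L : 'I_K -> 'rV[R]_m -> R) (w : 'I_K -> R) (theta : 'rV[R]_m).

Definition avg_loss L : 'rV[R]_m -> R := fun x => K%:R^-1 * \sum_(i < K) L i x.

Definition cag_g0 L theta : 'rV[R]_m :=
  K%:R^-1 *: \sum_(i < K) grad (L i) theta.

Definition cag_gw L w theta : 'rV[R]_m :=
  K%:R^-1 *: \sum_(i < K) w i *: grad (L i) theta.

Definition cag_phi L (c : R) theta : R := c ^+ 2 * enorm (cag_g0 L theta) ^+ 2.

Definition cag_obj L (c : R) theta w : R :=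
  dotv (cag_gw L w theta) (cag_g0 L theta)
  + Num.sqrt (cag_phi L c theta) * enorm (cag_gw L w theta).

Definition cag_weight L (c : R) theta w : Prop :=
  simplex w /\ forall w', simplex w' -> cag_obj L c theta w <= cag_obj L c theta w'.

(* CAGrad update direction  g0 + phi^{1/2}/||g_w|| g_w  (x/0 = 0 convention) *)
Definition cag_dir L (c : R) theta w : 'rV[R]_m :=
  cag_g0 L theta
  + (Num.sqrt (cag_phi L c theta) / enorm (cag_gw L w theta)) *: cag_gw L w theta.

Definition cagrad_seq L (c alpha : R) (theta : nat -> 'rV[R]_m) : Prop :=
  forall t : nat, exists w, cag_weight L c (theta t) w /\
    theta t.+1 = theta t - alpha *: cag_dir L c (theta t) w.

(* the family (L_0, L_1, ..., L_K) indexed by 'I_K.+1 *)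
Definition all_losses L : 'I_K.+1 -> 'rV[R]_m -> R :=
  fun j => match unlift ord0 j with None => avg_loss L | Some i => L i end.

End CAGradDefs.

(* Main.v *)
Require Import Defs.
From HB Require Import structures.
From mathcomp Require Import all_boot all_order all_algebra.
From mathcomp Require Import all_classical all_reals all_analysis.
From mathcomp Require Import ring lra.
Import Order.TTheory GRing.Theory Num.Theory.
Import numFieldNormedType.Exports.
Local Open Scope classical_set_scope.
Local Open Scope ring_scope.

Section Helpers.
Variables (R : realType) (m : nat).
Implicit Types (u v : 'rV[R]_m).

Lemma dotvDl u v w : dotv (u + v) w = dotv u w + dotv v w.
Proof. by rewrite /dotv -big_split; apply: eq_bigr => j _; rewrite !mxE mulrDl. Qed.
Lemma dotvBl u v w : dotv (u - v) w = dotv u w - dotv v w.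
Proof. by rewrite /dotv -sumrB; apply: eq_bigr => j _; rewrite !mxE mulrBl. Qed.
Lemma dotvZl a u w : dotv (a *: u) w = a * dotv u w.
Proof. by rewrite /dotv mulr_sumr; apply: eq_bigr => j _; rewrite !mxE mulrA. Qed.
Lemma dotvC u v : dotv u v = dotv v u.
Proof. by rewrite /dotv; apply: eq_bigr => j _; rewrite mulrC. Qed.
Lemma dotvDr u v w : dotv w (u + v) = dotv w u + dotv w v.
Proof. by rewrite !(dotvC w) dotvDl. Qed.
Lemma dotvBr u v w : dotv w (u - v) = dotv w u - dotv w v.
Proof. by rewrite !(dotvC w) dotvBl. Qed.
Lemma dotvZr a u w : dotv w (a *: u) = a * dotv w u.
Proof. by rewrite !(dotvC w) dotvZl. Qed.
Lemma dotvNr u w : dotv w (- u) = - dotv w u.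
Proof. by rewrite -scaleN1r dotvZr mulN1r. Qed.
Lemma dotvNl u w : dotv (- u) w = - dotv u w.
Proof. by rewrite dotvC dotvNr dotvC. Qed.
Lemma dotv_ge0 u : 0 <= dotv u u.
Proof. by apply: sumr_ge0 => j _; rewrite -expr2 sqr_ge0. Qed.
Lemma enormE u : enorm u = Num.sqrt (dotv u u).
Proof. by rewrite /enorm /dotv; under eq_bigr do rewrite expr2. Qed.
Lemma enorm_ge0 u : 0 <= enorm u.
Proof. by rewrite enormE sqrtr_ge0. Qed.
Lemma enorm_sq u : enorm u ^+ 2 = dotv u u.
Proof. by rewrite enormE sqr_sqrtr // dotv_ge0. Qed.
Lemma dotv0 u : dotv u u = 0 -> u = 0.
Proof.
move=> /eqP; rewrite /dotv psumr_eq0 => [/allP H|j _]; last by rewrite -expr2 sqr_ge0.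
apply/rowP => j; rewrite mxE; apply/eqP.
by have := H j (mem_index_enum _); rewrite mulf_eq0 orbb.
Qed.
Lemma enormZ a u : enorm (a *: u) = `|a| * enorm u.
Proof. by rewrite !enormE dotvZl dotvZr mulrA -expr2 sqrtrM ?sqr_ge0 // sqrtr_sqr. Qed.

Lemma cauchy_schwarz u v : dotv u v <= enorm u * enorm v.
Proof.
set a := enorm u; set b := enorm v.
have a0 : 0 <= a by exact: enorm_ge0.
have b0 : 0 <= b by exact: enorm_ge0.
have [a00|an0] := eqVneq a 0.
  have : dotv u u = 0 by rewrite -enorm_sq -/a a00 expr0n.
  by move/dotv0 => ->; rewrite a00 /dotv big1 ?mul0r // => j _; rewrite mxE mul0r.
have [b00|bn0] := eqVneq b 0.
  have : dotv v v = 0 by rewrite -enorm_sq -/b b00 expr0n.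
  by move/dotv0 => ->; rewrite b00 /dotv big1 ?mulr0 // => j _; rewrite mxE mulr0.
have h := dotv_ge0 (b *: u - a *: v).
rewrite dotvBl !dotvZl !dotvBr !dotvZr -!enorm_sq -/a -/b in h.
rewrite (dotvC v u) in h.
have ap : 0 < a by rewrite lt_def an0.
have bp : 0 < b by rewrite lt_def bn0.
have abp : 0 < a * b by rewrite mulr_gt0.
nra.
Qed.

Lemma gradE (f : 'rV[R]_m -> R) x v : differentiable f x ->
  'D_v f x = dotv (grad f x) v.
Proof.
move=> df; rewrite deriveE // {1}(row_sum_delta v) linear_sum /dotv.
apply: eq_bigr => j _; rewrite linearZ /= mxE -deriveE // mulrC.
by [].
Qed.


Lemma descent (f : 'rV[R]_m -> R) (H : R) x v (a : R) :
  (forall y, differentiable f y) ->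
  (forall y z, enorm (grad f y - grad f z) <= H * enorm (y - z)) -> 0 <= a ->
  f (x + a *: v) <= f x + a * dotv (grad f x) v + H / 2 * dotv v v * a ^+ 2.
Proof.
move=> df Hl a0.
set c1 := dotv (grad f x) v; set k := H / 2 * dotv v v.
pose g := fun s : R => f (x + s *: v).
have dg (s : R) : is_derive s (1 : R) g (dotv (grad f (x + s *: v)) v).
  have E : (fun h : R => h^-1 *: ((g \o shift s) (h *: 1) - g s)) =
      (fun h => h^-1 *: ((f \o shift (x + s *: v)) (h *: v) - f (x + s *: v))).
    apply/funext => h /=; rewrite /g; congr (_ *: (f _ - _)).
    by rewrite -[h *: 1]/(h * 1) mulr1 scalerDl addrCA.
  apply: DeriveDef; first by rewrite /derivable E; exact: diff_derivable.
  have -> : derive g s 1 = derive f (x + s *: v) v by rewrite /derive E.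
  exact: gradE.
pose h : R -> R := g - c1 \*: (@id R) - k \*: ((@id R) ^+ 2).
have D (s : R) : is_derive s (1 : R) h (dotv (grad f (x + s *: v)) v - c1 *: 1 - k *: ((2%:R * id s ^+ 2.-1) *: 1)).
  apply: is_deriveB.
have cont : {within `[0, a], continuous h}.
  apply: derivable_within_continuous => s _; exact: (@ex_derive _ _ _ _ _ _ _ (D s)).
have [c /andP[c0 ca] /= E] := MVT_segment a0 (fun s _ => D s) cont.
move: E; rewrite /h /=.
rewrite bnd_simp in c0; rewrite bnd_simp in ca.
have key : dotv (grad f (x + c *: v)) v - c1 <= H * c * dotv v v.
  rewrite /c1 -dotvBl; apply: le_trans (cauchy_schwarz _ _) _.
  have := Hl (x + c *: v) x; rewrite addrAC subrr add0r enormZ ger0_norm // => Hle.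
  apply: le_trans (ler_wpM2r (enorm_ge0 v) Hle) _.
  rewrite -enorm_sq [X in _ <= X](_ : _ = H * (c * enorm v) * enorm v) //; ring.
have sE : forall p q : R, p *: q = p * q by [].
rewrite /g !sE /= !fctE /= !sE scale0r addr0 !mulr1 expr1 => E.
have hk : k = H / 2 * dotv v v by [].
clearbody k c1.
nra.
Qed.
End Helpers.

Section Avg.
Variables (R : realType) (m K : nat) (L : 'I_K -> 'rV[R]_m -> R).
Hypothesis dL : forall i x, differentiable (L i) x.

Lemma avgE : avg_loss L = K%:R^-1 *: (\sum_(i < K) L i).
Proof. by apply/funext => y; rewrite /avg_loss fct_sumE. Qed.

Lemma avg_diff x : differentiable (avg_loss L) x.
Proof. by rewrite avgE; apply: differentiableZ; apply: differentiable_sum. Qed.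

Lemma grad_avg x : grad (avg_loss L) x = cag_g0 L x.
Proof.
apply/rowP => j; rewrite /cag_g0 !mxE avgE deriveZ; last first.
  by apply: derivable_sum => i; apply: diff_derivable.
rewrite derive_sum; last by move=> i; apply: diff_derivable.
rewrite summxE; congr (_ *: _); apply: eq_bigr => i _; by rewrite mxE.
Qed.

End Avg.

Local Close Scope classical_set_scope.

Theorem theorem1 (R : realType) (m K : nat) (L : 'I_K -> 'rV[R]_m -> R)
    (H alpha c : R) (theta : nat -> 'rV[R]_m) :
  (2 <= K)%N ->
  (forall i x, differentiable (L i) x) ->
  0 < H ->
  (forall (j : 'I_K.+1) (x y : 'rV[R]_m),
      enorm (grad (all_losses L j) x - grad (all_losses L j) y) <= H * enorm (x - y)) ->
  has_lbound (range (avg_loss L)) ->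
  0 < alpha -> alpha <= H^-1 ->
  0 <= c ->
  cagrad_seq L c alpha theta ->
  (1 <= c ->
     forall (x : 'rV[R]_m) (w : 'I_K -> R),
       cag_weight L c x w -> cag_dir L c x w = 0 ->
       pareto_stationary (all_losses L) x)
  /\
  (c < 1 ->
     forall T : nat,
       \sum_(t < T.+1) enorm (grad (avg_loss L) (theta t)) ^+ 2
       <= 2 * (avg_loss L (theta 0%N) - inf (range (avg_loss L)))
          / (alpha * (1 - c ^+ 2))).
Proof.
move=> K2 dL H0 HL Hlb a0 aH c0 Hseq.
have Kp : 0 < K%:R :> R by rewrite ltr0n; apply: leq_trans K2.
have KN0 : K%:R != 0 :> R by rewrite gt_eqF.
split.
  move=> _ x w [[w0 w1] _] Hd.
  set mu := Num.sqrt (cag_phi L c x) / enorm (cag_gw L w x).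
  have mu0 : 0 <= mu by rewrite divr_ge0 ?sqrtr_ge0 ?enorm_ge0.
  set S1 := \sum_(i < K) grad (L i) x.
  set S2 := \sum_(i < K) w i *: grad (L i) x.
  have HS : S1 + mu *: S2 = 0.
    move: Hd; rewrite /cag_dir /cag_g0 /cag_gw -/mu -/S1 -/S2 => Hd.
    have : K%:R *: (K%:R^-1 *: S1 + mu *: (K%:R^-1 *: S2)) = 0 by rewrite Hd scaler0.
    by rewrite scalerDr !scalerA mulfV // scale1r mulrAC mulfV // mul1r.
  have Kmu : 0 < K%:R + mu by apply: ltr_wpDr.
  exists (fun j => match unlift ord0 j with None => 0 | Some i => (1 + mu * w i) / (K%:R + mu) end).
  split; first split.
  - move=> j; case: (unlift ord0 j) => [i|] //.
    by apply: divr_ge0; [apply: addr_ge0 => //; apply: mulr_ge0|apply: ltW].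
  - rewrite big_ord_recl /= unlift_none add0r.
    under eq_bigr => i _ do rewrite liftK.
    rewrite -mulr_suml big_split /= sumr_const card_ord -mulr_sumr w1 mulr1.
    by rewrite -[1 *+ K]/(K%:R) divff // gt_eqF.
  - rewrite big_ord_recl /= unlift_none scale0r add0r.
    rewrite /all_losses.
    under eq_bigr => i _ do rewrite liftK /=.
    have -> : \sum_(i < K) ((1 + mu * w i) / (K%:R + mu)) *: grad (L i) x =
        (K%:R + mu)^-1 *: (S1 + mu *: S2).
      rewrite /S1 /S2 scaler_sumr -big_split scaler_sumr; apply: eq_bigr => i _ /=.
      rewrite scalerA scalerDr scalerA -scalerDl; congr (_ *: _); ring.
    rewrite HS scaler0 /enorm big1 ?sqrtr0 // => j _; by rewrite mxE expr0n.
move=> c1.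
have Hl0 : forall y z, enorm (grad (avg_loss L) y - grad (avg_loss L) z) <= H * enorm (y - z).
  by move=> y z; have := HL ord0 y z; rewrite /all_losses unlift_none.
have aH1 : alpha * H <= 1 by rewrite -ler_pdivlMr // div1r.
have step t : alpha / 2 * (1 - c ^+ 2) * enorm (grad (avg_loss L) (theta t)) ^+ 2
    <= avg_loss L (theta t) - avg_loss L (theta t.+1).
  have [w [_ Eth]] := Hseq t; rewrite Eth.
  rewrite grad_avg //.
  set x := theta t; set g := cag_g0 L x.
  set mu := Num.sqrt (cag_phi L c x) / enorm (cag_gw L w x).
  set e := mu *: cag_gw L w x.
  have -> : cag_dir L c x w = g + e by [].
  have ee : dotv e e <= c ^+ 2 * dotv g g.
    rewrite /e dotvZl dotvZr mulrA -expr2 -enorm_sq.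
    have [n0|nn0] := eqVneq (enorm (cag_gw L w x)) 0.
      by rewrite n0 expr0n mulr0 mulr_ge0 ?sqr_ge0 ?dotv_ge0.
    rewrite /mu expr_div_n mulfVK ?expf_neq0 // sqr_sqrtr; last first.
      by rewrite /cag_phi mulr_ge0 ?sqr_ge0.
    by rewrite /cag_phi enorm_sq.
  have := @descent R m (avg_loss L) H x (- (g + e)) alpha (@avg_diff R m K L dL) Hl0 (ltW a0).
  rewrite grad_avg // -/g scalerN dotvNr !dotvDr dotvNr !dotvDr.
  rewrite !dotvNl !dotvDl enorm_sq.
  have D0 := @dotv_ge0 R m (g + e).
  rewrite !dotvDl !dotvDr in D0.
  rewrite (@dotvC R m e g) in D0 *.
  have gg0 := @dotv_ge0 R m g.
  set D := dotv g g + dotv g e + (dotv g e + dotv e e) in D0 *.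
  have hD : H / 2 * D * alpha ^+ 2 <= alpha / 2 * D.
    rewrite -subr_ge0 [X in 0 <= X](_ : _ = alpha / 2 * D * (1 - alpha * H)); last by ring.
    by rewrite mulr_ge0 ?subr_ge0 // mulr_ge0 // divr_ge0 // ltW.
  have hee : alpha * dotv e e <= alpha * (c ^+ 2 * dotv g g) by rewrite ler_pM2l.
  have eqD : - (- (dotv g g + dotv g e) - (dotv g e + dotv e e)) = D by rewrite /D; ring.
  rewrite eqD; rewrite /D in hD *; nra.
set f := avg_loss L.
have tel : forall T, alpha / 2 * (1 - c ^+ 2) *
    \sum_(t < T.+1) enorm (grad f (theta t)) ^+ 2 <= f (theta 0%N) - f (theta T.+1).
  elim=> [|T IH].
    by rewrite big_ord1; exact: step.
  rewrite big_ord_recr /= mulrDr.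
  have := step T.+1; rewrite -/f; lra.
move=> T.
have hinf : inf (range f) <= f (theta T.+1).
  by apply: (ge_inf Hlb); exists (theta T.+1).
have cp : 0 < 1 - c ^+ 2 by rewrite subr_gt0 expr_lt1 // ltW.
rewrite ler_pdivlMr ?mulr_gt0 //.
have := tel T; nra.
Qed.
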